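(* Let $X$ be a class of groups such that $\rho(G)\in X$ for every group $G$, $X$ is closed under normal subgroups, and $X$ contains all abelian groups. Let $G$ be a group and $N$ a normal subgroup of $G$ such that $\rho(N)=\{e\}$ and $\rho(G/N)=\{e\}$. Then $\rho(G)=\{e\}$.
   Context: A class of groups is a class of groups containing the trivial group and closed under isomorphism. For a class $X$ and a group $G$, $\rho(G)=\rho_X(G)$ denotes the subgroup of $G$ generated by all normal subgroups of $G$ that belong to $X$. *)

(* Defs.v *)
From Stdlib Require Import FunctionalExtensionality PropExtensionality ProofIrrelevance.

Record group := Group {
  carrier :> Type;
  gmul : carrier -> carrier -> carrier;
  gone : carrier;
  ginv : carrier -> carrier;
  gmulA : forall x y z, gmul x (gmul y z) = gmul (gmul x y) z;
  gmul1l : forall x, gmul gone x = x;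
  gmul1r : forall x, gmul x gone = x;
  gmulVl : forall x, gmul (ginv x) x = gone;
  gmulVr : forall x, gmul x (ginv x) = gone
}.
Arguments gmul {g}.
Arguments gone {g}.
Arguments ginv {g}.

Section GroupLemmas.
Variable G : group.
Lemma ginv_mul (x y : G) : ginv (gmul x y) = gmul (ginv y) (ginv x).
Proof.
  assert (H : gmul (gmul x y) (gmul (ginv y) (ginv x)) = gone).
  { rewrite gmulA, <- (gmulA _ x y), gmulVr, gmul1r, gmulVr. reflexivity. }
  rewrite <- (gmul1r _ (ginv (gmul x y))), <- H, gmulA, gmulVl, gmul1l.
  reflexivity.
Qed.
Lemma ginvK (x : G) : ginv (ginv x) = x.
Proof.
  rewrite <- (gmul1r _ (ginv (ginv x))), <- (gmulVl _ x), gmulA, gmulVl, gmul1l.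
  reflexivity.
Qed.
End GroupLemmas.

Definition subgroup (G : group) (H : G -> Prop) : Prop :=
  H gone /\ (forall x y, H x -> H y -> H (gmul x y)) /\ (forall x, H x -> H (ginv x)).

Definition normal (G : group) (H : G -> Prop) : Prop :=
  subgroup G H /\ (forall g x, H x -> H (gmul (ginv g) (gmul x g))).

Lemma normal_subgroup (G : group) (H : G -> Prop) : normal G H -> subgroup G H.
Proof. intros [h _]; exact h. Qed.

Section SubGroup.
Variables (G : group) (H : G -> Prop) (hH : subgroup G H).
Definition sg_T := {x : G | H x}.
Definition sg_mul (a b : sg_T) : sg_T :=
  exist _ (gmul (proj1_sig a) (proj1_sig b))
    (proj1 (proj2 hH) _ _ (proj2_sig a) (proj2_sig b)).
Definition sg_one : sg_T := exist _ gone (proj1 hH).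
Definition sg_inv (a : sg_T) : sg_T :=
  exist _ (ginv (proj1_sig a)) (proj2 (proj2 hH) _ (proj2_sig a)).
Lemma sg_eq (a b : sg_T) : proj1_sig a = proj1_sig b -> a = b.
Proof.
  destruct a as [a pa], b as [b pb]; simpl; intros ->.
  f_equal; apply proof_irrelevance.
Qed.
Definition sub_grp : group.
Proof.
  refine (@Group sg_T sg_mul sg_one sg_inv _ _ _ _ _);
  intros; apply sg_eq; simpl.
  - apply gmulA. - apply gmul1l. - apply gmul1r. - apply gmulVl. - apply gmulVr.
Defined.
End SubGroup.

(** The quotient group G/N: its elements are the left cosets gN (as sets). *)
Section Quotient.
Variables (G : group) (N : G -> Prop) (hN : normal G N).

Definition coset (g : G) : G -> Prop := fun x => N (gmul (ginv g) x).
Definition q_T := {S : G -> Prop | exists g, S = coset g}.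

Definition setmul (S T : G -> Prop) : G -> Prop :=
  fun x => exists s t, S s /\ T t /\ x = gmul s t.
Definition setinv (S : G -> Prop) : G -> Prop := fun x => S (ginv x).

Lemma N1 : N gone. Proof. exact (proj1 (proj1 hN)). Qed.
Lemma NM x y : N x -> N y -> N (gmul x y). Proof. exact (proj1 (proj2 (proj1 hN)) x y). Qed.
Lemma NV x : N x -> N (ginv x). Proof. exact (proj2 (proj2 (proj1 hN)) x). Qed.
Lemma NJ g x : N x -> N (gmul (ginv g) (gmul x g)). Proof. exact (proj2 hN g x). Qed.
Lemma NJ' g x : N x -> N (gmul g (gmul x (ginv g))).
Proof. intro h. pose proof (NJ (ginv g) x h) as h'. rewrite ginvK in h'. exact h'. Qed.

Lemma setmul_coset g h : setmul (coset g) (coset h) = coset (gmul g h).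
Proof.
  apply functional_extensionality; intro x; apply propositional_extensionality.
  unfold setmul, coset; split.
  - intros [s [t [hs [ht ->]]]].
    rewrite ginv_mul.
    replace (gmul (gmul (ginv h) (ginv g)) (gmul s t))
      with (gmul (gmul (ginv h) (gmul (gmul (ginv g) s) h)) (gmul (ginv h) t)).
    + apply NM; [|exact ht].
      rewrite gmulA. (* (h^-1 (g^-1 s)) h *)
      rewrite <- gmulA. apply NJ. exact hs.
    + repeat rewrite gmulA. rewrite <- (gmulA _ _ h (ginv h)), gmulVr, gmul1r.
      reflexivity.
  - intro hx. exists g, (gmul (ginv g) x). split; [|split].
    + rewrite gmulVl. exact N1.
    + rewrite gmulA, <- ginv_mul. exact hx.
    + rewrite gmulA, gmulVr, gmul1l. reflexivity.
Qed.

Lemma setinv_coset g : setinv (coset g) = coset (ginv g).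
Proof.
  apply functional_extensionality; intro x; apply propositional_extensionality.
  unfold setinv, coset; rewrite ginvK; split; intro hx.
  - (* N (g^-1 x^-1) -> N (g x) *)
    pose proof (NV _ hx) as h1. rewrite ginv_mul, !ginvK in h1.
    (* h1 : N (x g) ; conjugate by g^-1 *)
    pose proof (NJ' g _ h1) as h2.
    replace (gmul g x) with (gmul g (gmul (gmul x g) (ginv g))); [exact h2|].
    rewrite <- gmulA, gmulVr, gmul1r. reflexivity.
  - pose proof (NJ g _ hx) as h2.
    replace (gmul (ginv g) (gmul (gmul g x) g)) with (gmul x g) in h2
      by (rewrite gmulA, gmulA, gmulVl, gmul1l; reflexivity).
    pose proof (NV _ h2) as h3. rewrite ginv_mul in h3. exact h3.
Qed.

Lemma coset1 : coset gone = N.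
Proof.
  apply functional_extensionality; intro x; unfold coset.
  replace (ginv (@gone G)) with (@gone G) by
    (rewrite <- (gmul1l _ (ginv gone)), gmulVr; reflexivity).
  rewrite gmul1l; reflexivity.
Qed.

Definition q_mul (a b : q_T) : q_T.
Proof.
  refine (exist _ (setmul (proj1_sig a) (proj1_sig b)) _).
  destruct a as [S [g ->]], b as [T [h ->]]; simpl.
  exists (gmul g h); apply setmul_coset.
Defined.
Definition q_one : q_T := exist _ N (ex_intro _ gone (eq_sym coset1)).
Definition q_inv (a : q_T) : q_T.
Proof.
  refine (exist _ (setinv (proj1_sig a)) _).
  destruct a as [S [g ->]]; simpl.
  exists (ginv g); apply setinv_coset.
Defined.

Lemma q_eq (a b : q_T) : proj1_sig a = proj1_sig b -> a = b.
Proof.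
  destruct a as [a pa], b as [b pb]; simpl; intros ->.
  f_equal; apply proof_irrelevance.
Qed.

Definition quot : group.
Proof.
  refine (@Group q_T q_mul q_one q_inv _ _ _ _ _); intros; apply q_eq; simpl.
  - destruct x as [S [g ->]], y as [T [h ->]], z as [U [k ->]]; simpl.
    rewrite !setmul_coset, gmulA; reflexivity.
  - destruct x as [S [g ->]]; simpl.
    rewrite <- coset1, setmul_coset, gmul1l; reflexivity.
  - destruct x as [S [g ->]]; simpl.
    rewrite <- coset1, setmul_coset, gmul1r; reflexivity.
  - destruct x as [S [g ->]]; simpl.
    rewrite setinv_coset, setmul_coset, gmulVl, coset1; reflexivity.
  - destruct x as [S [g ->]]; simpl.
    rewrite setinv_coset, setmul_coset, gmulVr, coset1; reflexivity.
Defined.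
End Quotient.

Definition isomorphic (G H : group) : Prop :=
  exists f : G -> H,
    (forall x y, f (gmul x y) = gmul (f x) (f y)) /\
    (forall x y, f x = f y -> x = y) /\ (forall z, exists x, f x = z).

Definition abelian (G : group) : Prop := forall x y : G, gmul x y = gmul y x.
Definition trivial_group (G : group) : Prop := forall x : G, x = gone.

Definition group_class (X : group -> Prop) : Prop :=
  (forall G, trivial_group G -> X G) /\
  (forall G H, isomorphic G H -> X G -> X H).

(** rho_X(G): subgroup generated by all normal subgroups of G belonging to X,
    i.e. the intersection of all subgroups containing every such normal subgroup. *)
Definition rho (X : group -> Prop) (G : group) : G -> Prop :=
  fun x => forall K : G -> Prop, subgroup G K ->
    (forall (H : G -> Prop) (hH : normal G H),
        X (sub_grp G H (normal_subgroup G H hH)) -> forall y, H y -> K y) ->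
    K x.

Lemma rho_subgroup X G : subgroup G (rho X G).
Proof.
  unfold rho; split; [|split].
  - intros K [k1 _] _; exact k1.
  - intros x y hx hy K hK hc. exact (proj1 (proj2 hK) _ _ (hx K hK hc) (hy K hK hc)).
  - intros x hx K hK hc. exact (proj2 (proj2 hK) _ (hx K hK hc)).
Qed.

Definition rho_grp (X : group -> Prop) (G : group) : group :=
  sub_grp G (rho X G) (rho_subgroup X G).

Definition rho_trivial (X : group -> Prop) (G : group) : Prop :=
  forall x : G, rho X G x -> x = gone.

Definition closed_normal_sub (X : group -> Prop) : Prop :=
  forall (G : group) (H : G -> Prop) (hH : normal G H),
    X G -> X (sub_grp G H (normal_subgroup G H hH)).

(* Main.v *)
Require Import Defs.

Lemma ginv1 (G : group) : ginv (@gone G) = gone.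
Proof. rewrite <- (gmul1l _ (ginv gone)), gmulVr; reflexivity. Qed.

Lemma in_rho X G H (hH : normal G H) :
  X (sub_grp G H (normal_subgroup G H hH)) -> forall y, H y -> rho X G y.
Proof. intros hx y hy K hK hc. exact (hc H hH hx y hy). Qed.

Lemma rho_normal X G : normal G (rho X G).
Proof.
  split; [apply rho_subgroup|].
  intros g x hx K hK hc.
  set (K' := fun y => K (gmul (ginv g) (gmul y g))).
  assert (hK' : subgroup G K').
  { destruct hK as [k1 [k2 k3]]; unfold K'; split; [|split].
    - rewrite gmul1l, gmulVl; exact k1.
    - intros a b ha hb.
      replace (gmul (ginv g) (gmul (gmul a b) g)) with
        (gmul (gmul (ginv g) (gmul a g)) (gmul (ginv g) (gmul b g))).
      + apply k2; assumption.
      + rewrite !gmulA, <- (gmulA _ _ g (ginv g)), gmulVr, gmul1r; reflexivity.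
    - intros a ha.
      replace (gmul (ginv g) (gmul (ginv a) g)) with
        (ginv (gmul (ginv g) (gmul a g))).
      + apply k3; assumption.
      + rewrite !ginv_mul, ginvK, gmulA; reflexivity. }
  apply (hx K' hK').
  intros H hH hXH y hy. unfold K'. apply (hc H hH hXH). apply (proj2 hH). exact hy.
Qed.

Section Main.
Variables (X : group -> Prop) (hX : group_class X)
  (hrho : forall G : group, X (rho_grp X G))
  (hnorm : closed_normal_sub X)
  (G : group) (N : G -> Prop) (hN : normal G N).

Let R := rho X G.
Let hR := rho_normal X G.

Definition HA : rho_grp X G -> Prop := fun r => N (proj1_sig r).
Lemma HA_normal : normal (rho_grp X G) HA.
Proof.
  unfold HA; split; [split; [|split]|]; simpl.
  - exact (proj1 (proj1 hN)).
  - intros a b ha hb. exact (proj1 (proj2 (proj1 hN)) _ _ ha hb).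
  - intros a ha. exact (proj2 (proj2 (proj1 hN)) _ ha).
  - intros g x hx. exact (proj2 hN _ _ hx).
Qed.

Definition MA : sub_grp G N (normal_subgroup G N hN) -> Prop :=
  fun n => R (proj1_sig n).
Lemma MA_normal : normal _ MA.
Proof.
  unfold MA; split; [split; [|split]|]; simpl.
  - exact (proj1 (proj1 hR)).
  - intros a b ha hb. exact (proj1 (proj2 (proj1 hR)) _ _ ha hb).
  - intros a ha. exact (proj2 (proj2 (proj1 hR)) _ ha).
  - intros g x hx. exact (proj2 hR _ _ hx).
Qed.

Lemma stepA : rho_trivial X (sub_grp G N (normal_subgroup G N hN)) ->
  forall x, R x -> N x -> x = gone.
Proof.
  intros h1 x rx nx.
  assert (hXM : X (sub_grp _ MA (normal_subgroup _ MA MA_normal))).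
  { apply (proj2 hX (sub_grp _ HA (normal_subgroup _ HA HA_normal))).
    2: apply hnorm; apply hrho.
    unshelve eexists.
    { intros [[y ry] ny]. exists (exist _ y ny). exact ry. }
    split; [|split].
    - intros [[a ra] na] [[b rb] nb]. apply sg_eq, sg_eq; reflexivity.
    - intros [[a ra] na] [[b rb] nb] e.
      apply (f_equal (fun z => proj1_sig (proj1_sig z))) in e. simpl in e.
      apply sg_eq, sg_eq; exact e.
    - intros [[y ny] ry]. exists (exist _ (exist _ y ry) ny).
      apply sg_eq, sg_eq; reflexivity. }
  pose proof (in_rho _ _ _ MA_normal hXM (exist _ x nx) rx) as hr.
  apply h1 in hr. apply (f_equal (@proj1_sig _ _)) in hr. exact hr.
Qed.

Definition QB : quot G N hN -> Prop :=
  fun q => exists r, R r /\ proj1_sig q = coset G N r.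

Lemma QB_normal : normal _ QB.
Proof.
  unfold QB; split; [split; [|split]|].
  - exists gone. split; [exact (proj1 (proj1 hR))|]. simpl. rewrite coset1. reflexivity.
  - intros [a pa] [b pb] [r [rr er]] [s [rs es]]; simpl in *.
    exists (gmul r s). split; [exact (proj1 (proj2 (proj1 hR)) _ _ rr rs)|].
    rewrite er, es. apply setmul_coset; exact hN.
  - intros [a pa] [r [rr er]]; simpl in *.
    exists (ginv r). split; [exact (proj2 (proj2 (proj1 hR)) _ rr)|].
    rewrite er. apply setinv_coset; exact hN.
  - intros [g [h eh]] [a pa] [r [rr er]]; simpl in *.
    exists (gmul (ginv h) (gmul r h)). split; [exact (proj2 hR _ _ rr)|].
    rewrite er, eh, !setmul_coset, setinv_coset by exact hN.
    rewrite setmul_coset by exact hN. reflexivity.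
Qed.

Lemma stepB : rho_trivial X (sub_grp G N (normal_subgroup G N hN)) ->
  rho_trivial X (quot G N hN) -> forall x, R x -> x = gone.
Proof.
  intros h1 h2 x rx.
  assert (hXQ : X (sub_grp _ QB (normal_subgroup _ QB QB_normal))).
  { apply (proj2 hX (rho_grp X G)); [|apply hrho].
    unshelve eexists.
    { intros [y ry]. unshelve eexists.
      - exists (coset G N y). exists y; reflexivity.
      - exists y. split; [exact ry|reflexivity]. }
    split; [|split].
    - intros [a ra] [b rb]. apply sg_eq, q_eq. simpl.
      symmetry; apply setmul_coset; exact hN.
    - intros [a ra] [b rb] e.
      apply (f_equal (fun z => proj1_sig (proj1_sig z))) in e. simpl in e.
      apply sg_eq; simpl.
      assert (nab : N (gmul (ginv a) b)).
      { change (coset G N a b). rewrite e. unfold coset. rewrite gmulVl.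
        exact (proj1 (proj1 hN)). }
      assert (rab : R (gmul (ginv a) b)).
      { exact (proj1 (proj2 (proj1 hR)) _ _ (proj2 (proj2 (proj1 hR)) _ ra) rb). }
      pose proof (stepA h1 _ rab nab) as h0.
      rewrite <- (gmul1r _ a), <- h0, gmulA, gmulVr, gmul1l. reflexivity.
    - intros [[S pS] [y [ry ey]]]. exists (exist _ y ry).
      apply sg_eq, q_eq. simpl in *. symmetry; exact ey. }
  pose proof (in_rho _ _ _ QB_normal hXQ) as hin.
  assert (hq : QB (exist _ (coset G N x) (ex_intro _ x eq_refl))).
  { exists x. split; [exact rx|reflexivity]. }
  apply hin, h2 in hq.
  apply (f_equal (@proj1_sig _ _)) in hq. simpl in hq.
  assert (nx : N x).
  { rewrite <- hq. unfold coset. rewrite gmulVl. exact (proj1 (proj1 hN)). }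
  exact (stepA h1 _ rx nx).
Qed.
End Main.

Theorem lemma6p9 (X : group -> Prop)
  (hX : group_class X)
  (hrho : forall G : group, X (rho_grp X G))
  (hnorm : closed_normal_sub X)
  (hab : forall G : group, abelian G -> X G)
  (G : group) (N : G -> Prop) (hN : normal G N)
  (hN1 : rho_trivial X (sub_grp G N (normal_subgroup G N hN)))
  (hQ1 : rho_trivial X (quot G N hN)) :
  rho_trivial X G.
Proof.
  intros x rx. exact (stepB X hX hrho hnorm G N hN hN1 hQ1 x rx).
Qed.
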